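(* Let $1\le k\le n-1$. There is $\varepsilon>0$ (depending on $k,n$) such that the following holds whenever $\alpha_1,\dots,\alpha_{k-1}>0$ satisfy $\alpha_{i+1}<\varepsilon\,\alpha_i$ for all $i$. Define $w:V_{k,n}\to\mathbb{R}$ by $w(i_1,\dots,i_k)=\sum_{1\le a<b\le k}\alpha_{b-a}\,i_a i_b$. Let $\{I,J\}$ and $\{X,Y\}$ be two different pairs of elements of $V_{k,n}$ such that $I$ and $J$ are noncrossing and $\chi_I+\chi_J=\chi_X+\chi_Y$. Then $X$ and $Y$ are crossing (i.e. not noncrossing), and $w(I)+w(J)<w(X)+w(Y)$.
   Context: $V_{k,n}$ denotes the set of integer vectors $I=(i_1,\dots,i_k)$ with $1\le i_1<\dots<i_k\le n$. Two arcs $(p<p')$ and $(q<q')$ cross if $p<q<p'<q'$ or $q<p<q'<p'$. $I,J\in V_{k,n}$ are noncrossing if for all indices $1\le a<b\le k$ such that $i_\ell=j_\ell$ for all $a<\ell<b$, the arcs $(i_a<i_b)$ and $(j_a<j_b)$ do not cross. Let $P_{k,n}=\{(a,b):a\in[k],b\in[n-k]\}$ and $\chi_I\in\{0,1\}^{P_{k,n}}$ with $(\chi_I)_{a,b}=1$ iff $i_a\le a+b-1$. *)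

(* Defs.v *)
From HB Require Import structures.
From mathcomp Require Import all_boot all_order all_algebra.
Set Implicit Arguments. Unset Strict Implicit. Unset Printing Implicit Defensive.
Import Order.TTheory GRing.Theory Num.Theory.

(* Elements of V_{k,n} are represented as sequences of naturals;
   entry i_a (paper, 1-based a) is [nth 0 I (a-1)] (0-based). *)
Definition inV (k n : nat) (I : seq nat) : bool :=
  [&& size I == k, sorted ltn I & all (fun x => 0 < x <= n) I].

Definition arcs_cross (p p' q q' : nat) : Prop :=
  (p < q < p' /\ p' < q') \/ (q < p < q' /\ q' < p').

(* noncrossing, with 0-based indices a < b < k *)
Definition noncrossing (k : nat) (I J : seq nat) : Prop :=
  forall a b : nat, a < b -> b < k ->
    (forall l : nat, a < l -> l < b -> nth 0 I l = nth 0 J l) ->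
    ~ arcs_cross (nth 0 I a) (nth 0 I b) (nth 0 J a) (nth 0 J b).

(* chi_I at the point (a+1, b+1) of P_{k,n}, with a : 'I_k, b : 'I_(n-k):
   equals 1 iff i_{a+1} <= (a+1)+(b+1)-1 = a+b+1. *)
Definition chi (k n : nat) (I : seq nat) (a : 'I_k) (b : 'I_(n - k)) : nat :=
  nat_of_bool (nth 0 I a <= a + b + 1).

Definition wt (R : numDomainType) (alpha : nat -> R) (k : nat) (I : seq nat) : R :=
  (\sum_(a < k) \sum_(b < k | (a < b)%N)
     alpha (b - a)%N * (nth 0 I a)%:R * (nth 0 I b)%:R)%R.
Arguments chi : clear implicits.

(* Main.v *)
Require Import Defs.
From HB Require Import structures.
From mathcomp Require Import all_boot all_order all_algebra.
From mathcomp Require Import zify ring lra.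
Import Order.TTheory GRing.Theory Num.Theory.

Lemma row2 (a m i j x y : nat) :
  a < i <= a.+1 + m -> a < j <= a.+1 + m -> a < x <= a.+1 + m -> a < y <= a.+1 + m ->
  (forall b, b < m -> nat_of_bool (i <= a + b + 1) + nat_of_bool (j <= a + b + 1)
     = nat_of_bool (x <= a + b + 1) + nat_of_bool (y <= a + b + 1)) ->
  (x = i /\ y = j) \/ (x = j /\ y = i).
Proof.
move=> hi hj hx hy E.
have tac : forall b, b < m -> (i <= a + b + 1) + (j <= a + b + 1)
     = (x <= a + b + 1) + (y <= a + b + 1) :> nat by [].
have h1 : minn x y = minn i j.
  case: (ltngtP (minn x y) (minn i j)) => // h.
  - have := E (minn x y - a.+1) ltac:(lia).
    by do 4 case: leqP => /=; lia.
  - have := E (minn i j - a.+1) ltac:(lia).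
    by do 4 case: leqP => /=; lia.
have h2 : maxn x y = maxn i j.
  case: (ltngtP (maxn x y) (maxn i j)) => // h.
  - have := E (maxn x y - a.+1) ltac:(lia).
    by do 4 case: leqP => /=; lia.
  - have := E (maxn i j - a.+1) ltac:(lia).
    by do 4 case: leqP => /=; lia.
lia.
Qed.

Lemma inV_mono k n I a b : inV k n I -> a < b -> b < k -> nth 0 I a < nth 0 I b.
Proof.
case/and3P=> /eqP hs hsort _ hab hb.
apply: (sorted_ltn_nth ltn_trans) => //; rewrite inE hs //; lia.
Qed.

Lemma inV_bound k n I a : inV k n I -> a < k -> a < nth 0 I a <= n - k + a.+1.
Proof.
move=> hV hak.
have hmono := fun a b => @inV_mono k n I a b hV.
have hall : forall c, c < k -> 0 < nth 0 I c <= n.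
  move=> c hc; case/and3P: hV => /eqP hs _ /allP; apply; apply: mem_nth; by rewrite hs.
have lo : forall c, c < k -> c < nth 0 I c.
  elim=> [|c IH] hc; first by (have := hall 0 hc; lia).
  have := IH (ltnW hc); have := hmono c c.+1 (ltnSn c) hc; lia.
have hi : forall d, a + d < k -> nth 0 I a + d <= nth 0 I (a + d).
  elim=> [|d IH] hd; first by rewrite !addn0.
  have := IH ltac:(lia); have := hmono (a + d) (a + d.+1) ltac:(lia) hd; lia.
have := hi (k.-1 - a) ltac:(lia); have := hall (a + (k.-1 - a)) ltac:(lia).
have := lo a hak; lia.
Qed.

Local Notation "s `@ a" := (nth 0 s a) (at level 10).

Definition rowQ (I J X Y : seq nat) l :=
  (X`@l = I`@l /\ Y`@l = J`@l) \/ (X`@l = J`@l /\ Y`@l = I`@l).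

Lemma consec k n I J X Y a b : inV k n I -> inV k n J -> inV k n X -> inV k n Y ->
  noncrossing k I J -> (forall l, l < k -> rowQ I J X Y l) -> a < b -> b < k ->
  I`@a != J`@a -> I`@b != J`@b -> (X`@a == I`@a) != (X`@b == I`@b) ->
  (forall l, a < l -> l < b -> I`@l = J`@l) ->
  I`@a * I`@b + J`@a * J`@b < X`@a * X`@b + Y`@a * Y`@b /\ ~ noncrossing k X Y.
Proof.
move=> hI hJ hX hY nIJ rows hab hbk /eqP Pa /eqP Pb hs betw.
have mI := @inV_mono k n I a b hI hab hbk.
have mJ := @inV_mono k n J a b hJ hab hbk.
have mX := @inV_mono k n X a b hX hab hbk.
have mY := @inV_mono k n Y a b hY hab hbk.
have nc := nIJ a b hab hbk betw.
have betwXY : forall l, a < l -> l < b -> X`@l = Y`@l.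
  move=> l h1 h2; have := betw l h1 h2; case: (rows l ltac:(lia)); lia.
rewrite /arcs_cross in nc.
have hs' : (X`@a = I`@a) <-> ~ (X`@b = I`@b).
  by move: hs; case: (X`@a =P I`@a); case: (X`@b =P I`@b) => //= *; tauto.
case: (rows a ltac:(lia)) => -[ea fa]; case: (rows b hbk) => -[eb fb];
  (try by exfalso; lia);
  (have H : (I`@a < J`@a /\ J`@b < I`@b) \/ (J`@a < I`@a /\ I`@b < J`@b) by lia);
  (split; [rewrite ea eb fa fb; case: H => -[h1 h2]; nia |
    move=> nXY; apply: (nXY a b hab hbk betwXY); rewrite /arcs_cross ea eb fa fb; lia]).
Qed.
Open Scope ring_scope.

Lemma alpha_chain (R : realFieldType) (alpha : nat -> R) (k : nat) (eps : R) :
  eps <= 1 ->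
  (forall i, (1 <= i)%N -> (i <= k - 1)%N -> 0 < alpha i) ->
  (forall i, (1 <= i)%N -> (i < k - 1)%N -> alpha i.+1 < eps * alpha i) ->
  forall d d', (1 <= d)%N -> (d < d')%N -> (d' <= k - 1)%N -> alpha d' <= eps * alpha d.
Proof.
move=> he1 hpos hch d; elim=> [|d' IH] // h1 h2 h3.
case: (ltngtP d d') => h; last first.
- by subst; apply: ltW; apply: hch; lia.
- lia.
have := IH h1 h ltac:(lia); have := hch d' ltac:(lia) ltac:(lia).
have := hpos d' ltac:(lia) ltac:(lia). move=> p1 p2 p3.
have : eps * alpha d' <= alpha d' by rewrite ler_piMl // ltW.
lra.
Qed.

Lemma sum_bound (R : realFieldType) (k : nat) (F : nat -> nat -> R) (a0 b0 : nat) (c M : R) :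
  (a0 < b0)%N -> (b0 < k)%N -> 0 <= c ->
  (forall a b : nat, (a < b)%N -> (b < k)%N -> - c <= F a b) -> M <= F a0 b0 ->
  M - (k * k)%:R * c <= \sum_(a < k) \sum_(b < k | (a < b)%N) F a b.
Proof.
move=> hab hbk hc hF hM.
have E : \sum_(a < k) \sum_(b < k | (a < b)%N) F a b =
   \sum_(a < k) \sum_(b < k | (a < b)%N) (F a b + c) -
   \sum_(a < k) \sum_(b < k | (a < b)%N) c.
  rewrite -sumrB; apply: eq_bigr => a _; rewrite -sumrB; apply: eq_bigr => b _.
  by rewrite addrK.
have E2 : \sum_(a < k) \sum_(b < k | (a < b)%N) c <= (k * k)%:R * c.
  have : \sum_(a < k) \sum_(b < k | (a < b)%N) c <= \sum_(a < k) \sum_(b < k) c.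
    apply: ler_sum => a _; rewrite big_mkcond /=; apply: ler_sum => b _.
    by case: ifP.
  rewrite !sumr_const !card_ord -mulrnA mulr_natl; exact.
have E3 : F a0 b0 + c <= \sum_(a < k) \sum_(b < k | (a < b)%N) (F a b + c).
  have ha0 : (a0 < k)%N by lia.
  rewrite (bigD1 (Ordinal ha0)) //= (bigD1 (Ordinal hbk)) //=.
  rewrite -addrA lerDl; apply: addr_ge0.
    apply: sumr_ge0 => b /andP [h _]; have := hF _ _ h (ltn_ord _); lra.
  apply: sumr_ge0 => a _; apply: sumr_ge0 => b h; have := hF _ _ h (ltn_ord _); lra.
rewrite E; lra.
Qed.

Close Scope ring_scope.



Lemma inV_size k n I : inV k n I -> size I = k.
Proof. by case/and3P => /eqP. Qed.

Lemma samecase (i j x y : nat) : ~~ ((i != j) && (x != i)) ->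
  (x = i /\ y = j) \/ (x = j /\ y = i) -> x = i /\ y = j.
Proof. by case: eqP; case: eqP => //= *; lia. Qed.

Lemma swapcase (i j x y : nat) : ~~ ((i != j) && (x == i)) ->
  (x = i /\ y = j) \/ (x = j /\ y = i) -> x = j /\ y = i.
Proof. by case: eqP; case: eqP => //= *; lia. Qed.

Definition flipb (I J X : seq nat) (a b : nat) :=
  [&& a < b, I`@a != J`@a, I`@b != J`@b & (X`@a == I`@a) != (X`@b == I`@b)].

Lemma nonflip (I J X Y : seq nat) a b : a < b -> rowQ I J X Y a -> rowQ I J X Y b ->
  X`@a * X`@b + Y`@a * Y`@b <> I`@a * I`@b + J`@a * J`@b -> flipb I J X a b.
Proof.
move=> hab ra rb e; rewrite /flipb hab /=.
case: ra => -[ea fa]; case: rb => -[eb fb]; rewrite ea fa eb fb in e *.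
- by exfalso; apply: e.
- rewrite eqxx /=; apply/and3P; split.
  + by apply/negP => /eqP h; apply: e; rewrite ?h; lia.
  + by apply/negP => /eqP h; apply: e; rewrite ?h; lia.
  + by apply/negP => /eqP h; apply: e; rewrite ?h; lia.
- rewrite eqxx /=; apply/and3P; split.
  + by apply/negP => /eqP h; apply: e; rewrite ?h; lia.
  + by apply/negP => /eqP h; apply: e; rewrite ?h; lia.
  + by apply/negP => /eqP h; apply: e; rewrite ?h; lia.
- by exfalso; apply: e; lia.
Qed.



Theorem lemma4p5 (R : realFieldType) (k n : nat) (hk1 : 1 <= k) (hkn : k < n) :
  exists eps : R, (0 < eps)%R /\
  forall alpha : nat -> R,
    (forall i, 1 <= i -> i <= k - 1 -> (0 < alpha i)%R) ->
    (forall i, 1 <= i -> i < k - 1 -> (alpha i.+1 < eps * alpha i)%R) ->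
    forall I J X Y : seq nat,
      inV k n I -> inV k n J -> inV k n X -> inV k n Y ->
      ~ ((I = X /\ J = Y) \/ (I = Y /\ J = X)) ->
      noncrossing k I J ->
      (forall (a : 'I_k) (b : 'I_(n - k)),
          chi k n I a b + chi k n J a b = chi k n X a b + chi k n Y a b) ->
      ~ noncrossing k X Y /\
      (wt alpha k I + wt alpha k J < wt alpha k X + wt alpha k Y)%R.
Proof.
pose K := (k * k * (2 * n * n)).+1.
exists (K%:R^-1)%R; split; first by rewrite invr_gt0 ltr0n.
move=> alpha hpos hch I J X Y hI hJ hX hY hne nIJ hchi.
have bnd : forall s l, inV k n s -> l < k -> l < s`@l <= l.+1 + (n - k).
  by move=> s l hs hl; have := @inV_bound k n s l hs hl; lia.
have rows : forall l, l < k -> rowQ I J X Y l.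
  move=> l hl; apply: (@row2 l (n - k)); try exact: bnd.
  by move=> b hb; exact: (hchi (Ordinal hl) (Ordinal hb)).
have hflip : exists a b, b < k /\ flipb I J X a b.
  case: (boolP [exists a : 'I_k, (I`@a != J`@a) && (X`@a != I`@a)]) =>
      [/existsP [a0 /andP [Pa0 sa0]] | /existsPn H1].
  - case: (boolP [exists b : 'I_k, (I`@b != J`@b) && (X`@b == I`@b)]) =>
       [/existsP [b0 /andP [Pb0 sb0]] | /existsPn H2].
    + case: (ltngtP a0 b0) => h.
      * exists a0, b0; split => //; rewrite /flipb h Pa0 Pb0 sb0 (negbTE sa0) //.
      * exists b0, a0; split => //; rewrite /flipb h Pa0 Pb0 sb0 (negbTE sa0) //.
      * by exfalso; rewrite h sb0 in sa0.
    + exfalso; apply: hne; right.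
      have E : forall l, l < k -> X`@l = J`@l /\ Y`@l = I`@l.
        by move=> l hl; apply: swapcase (H2 (Ordinal hl)) (rows l hl).
      split; (apply: (@eq_from_nth _ 0) => [|l hl]; [by rewrite ?(@inV_size k n I hI) ?(@inV_size k n J hJ) ?(@inV_size k n X hX) ?(@inV_size k n Y hY) | rewrite ?(@inV_size k n I hI) ?(@inV_size k n J hJ) ?(@inV_size k n X hX) ?(@inV_size k n Y hY) in hl; have := E l hl; lia]).
  - exfalso; apply: hne; left.
    have E : forall l, l < k -> X`@l = I`@l /\ Y`@l = J`@l.
      by move=> l hl; apply: samecase (H1 (Ordinal hl)) (rows l hl).
    split; (apply: (@eq_from_nth _ 0) => [|l hl]; [by rewrite ?(@inV_size k n I hI) ?(@inV_size k n J hJ) ?(@inV_size k n X hX) ?(@inV_size k n Y hY) | rewrite ?(@inV_size k n I hI) ?(@inV_size k n J hJ) ?(@inV_size k n X hX) ?(@inV_size k n Y hY) in hl; have := E l hl; lia]).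
pose Q d := [exists a : 'I_k, exists b : 'I_k, (a + d == b) && flipb I J X a b].
have hQ : forall a b, b < k -> flipb I J X a b -> Q (b - a).
  move=> a b hb hf; have hab : a < b by case/andP: hf.
  apply/existsP; exists (Ordinal (ltn_trans hab hb)); apply/existsP; exists (Ordinal hb).
  by rewrite /= hf andbT; apply/eqP; lia.
have hQ' : forall d, Q d -> exists a b, [/\ b < k, flipb I J X a b & a + d = b].
  move=> d /existsP [a /existsP [b /andP [/eqP e hf]]].
  by exists a, b; split.
have hex : exists d, Q d.
  by case: hflip => a [b [hb hf]]; exists (b - a); apply: hQ.
case: (ex_minnP hex) => d Qd dmin.
have cons : forall a b, b < k -> flipb I J X a b -> b - a = d ->
    forall l, a < l -> l < b -> I`@l = J`@l.
  move=> a b hb hf hd l h1 h2.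
  case: (eqVneq (I`@l) (J`@l)) => // Pl; exfalso.
  move/and4P: (hf) => [hab Pa Pb hs].
  case: (boolP ((X`@l == I`@l) != (X`@a == I`@a))) => hla.
  - have := dmin (l - a) (hQ a l ltac:(lia) ltac:(by rewrite /flipb h1 Pa Pl eq_sym hla)).
    lia.
  - move/negPn/eqP: hla => e.
    have := dmin (b - l) (hQ l b hb ltac:(by rewrite /flipb h2 Pl Pb e hs)).
    lia.
have key : forall a b, b < k -> flipb I J X a b -> b - a = d ->
    I`@a * I`@b + J`@a * J`@b < X`@a * X`@b + Y`@a * Y`@b /\ ~ noncrossing k X Y.
  move=> a b hb hf hd; move/and4P: (hf) => [hab Pa Pb hs].
  exact: (@consec k n I J X Y a b hI hJ hX hY nIJ rows hab hb Pa Pb hs (cons a b hb hf hd)).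
case: (hQ' d Qd) => a0 [b0 [hb0 hf0 e0]].
have hab0 : a0 < b0 by case/andP: hf0.
split; first by case: (key a0 b0 hb0 hf0 ltac:(lia)).
have hd1 : 1 <= d by lia.
have hdk : d <= k - 1 by lia.
have apos : (0 < alpha d)%R by apply: hpos.
have epos : (0 < K%:R^-1 :> R)%R by rewrite invr_gt0 ltr0n.
have eK : (K%:R^-1 * K%:R = 1 :> R)%R by rewrite mulVf // pnatr_eq0.
have ele1 : (K%:R^-1 <= 1 :> R)%R.
  by rewrite invf_le1 ?ltr0n // ler1n.
have chain := @alpha_chain R alpha k _ ele1 hpos hch.
have leN : forall s l, inV k n s -> l < k -> s`@l <= n.
  by move=> s l hs hl; have := @inV_bound k n s l hs hl; lia.
pose C := (2 * n * n)%N.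
pose F (a b : nat) := (alpha (b - a)%N * ((X`@a * X`@b + Y`@a * Y`@b)%:R
                     - (I`@a * I`@b + J`@a * J`@b)%:R))%R.
have Ew : (wt alpha k X + wt alpha k Y - (wt alpha k I + wt alpha k J) =
           \sum_(a < k) \sum_(b < k | (a < b)%N) F a b)%R.
  rewrite /wt -!big_split /= -sumrB; apply: eq_bigr => a _.
  rewrite -!big_split /= -sumrB; apply: eq_bigr => b _.
  rewrite /F !natrD !natrM; ring.
rewrite -subr_gt0 Ew.
pose c := (K%:R^-1 * alpha d * C%:R)%R.
have c0 : (0 <= c)%R by rewrite /c !mulr_ge0 ?ler0n // ltW.
have hF : forall a b, a < b -> b < k -> (- c <= F a b)%R.
  move=> a b hab hbk.
  have hBC : I`@a * I`@b + J`@a * J`@b <= C.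
    have h1 := leq_mul (leN I a hI (ltn_trans hab hbk)) (leN I b hI hbk).
    have h2 := leq_mul (leN J a hJ (ltn_trans hab hbk)) (leN J b hJ hbk).
    rewrite /C; clear -h1 h2; lia.
  have ap : (0 < alpha (b - a)%N)%R by apply: hpos; clear -hab hbk; lia.
  case: (eqVneq (X`@a * X`@b + Y`@a * Y`@b) (I`@a * I`@b + J`@a * J`@b)) => e.
    by rewrite /F e subrr mulr0 oppr_le0.
  have hf := @nonflip I J X Y a b hab (rows a (ltn_trans hab hbk)) (rows b hbk) (elimN eqP e).
  have := dmin (b - a) (hQ a b hbk hf).
  case: (ltngtP d (b - a)) => // h _.
  - have ch := chain d (b - a) hd1 h ltac:(clear -hbk; lia).
    have hB : ((I`@a * I`@b + J`@a * J`@b)%:R <= C%:R :> R)%R by rewrite ler_nat.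
    have hA : (0 <= (X`@a * X`@b + Y`@a * Y`@b)%:R :> R)%R by [].
    have C0 : (0 <= C%:R :> R)%R by apply: ler0n.
    rewrite /F /c; move: ch hB hA ap C0.
    set u := alpha (b - a)%N; set A' := ((X`@a * X`@b + Y`@a * Y`@b)%:R)%R; set B' := ((I`@a * I`@b + J`@a * J`@b)%:R)%R; set e' := (K%:R^-1 * alpha d)%R.
    move=> ch hB hA ap C0.
    have p1 : (0 <= u * A')%R by rewrite mulr_ge0 // ltW.
    have p2 : (0 <= u * (C%:R - B'))%R by rewrite mulr_ge0 ?subr_ge0 // ltW.
    have p3 : (0 <= (e' - u) * C%:R)%R by rewrite mulr_ge0 ?subr_ge0.
    lra.
  - have [hk _] := key a b hbk hf (esym h).
    have : ((I`@a * I`@b + J`@a * J`@b)%:R < (X`@a * X`@b + Y`@a * Y`@b)%:R :> R)%R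
      by rewrite ltr_nat.
    move=> hlt; rewrite /F.
    have : (0 <= alpha (b - a)%N * ((X`@a * X`@b + Y`@a * Y`@b)%:R
                     - (I`@a * I`@b + J`@a * J`@b)%:R))%R.
      by rewrite mulr_ge0 ?subr_ge0 ?ltW.
    lra.
have hM : (alpha d <= F a0 b0)%R.
  have [hk _] := key a0 b0 hb0 hf0 ltac:(clear -e0; lia).
  have : ((I`@a0 * I`@b0 + J`@a0 * J`@b0).+1%:R <= (X`@a0 * X`@b0 + Y`@a0 * Y`@b0)%:R :> R)%R
      by rewrite ler_nat.
  rewrite /F.
  have -> : (b0 - a0)%N = d by clear -e0; lia.
  rewrite -addn1 natrD => hle.
  have : (0 <= alpha d * ((X`@a0 * X`@b0 + Y`@a0 * Y`@b0)%:R
                     - (I`@a0 * I`@b0 + J`@a0 * J`@b0)%:R - 1))%R.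
    by apply: mulr_ge0; [exact: ltW | lra].
  lra.
have := @sum_bound R k F a0 b0 c (alpha d) hab0 hb0 c0 hF hM.
have : ((k * k)%:R * C%:R + 1 = K%:R :> R)%R by rewrite -natrM natr1.
rewrite /c => HK hsum.
have eK' : (K%:R^-1 * K%:R * alpha d = alpha d :> R)%R by rewrite eK mul1r.
have HK' : (K%:R^-1 * alpha d * ((k * k)%:R * C%:R) = K%:R^-1 * alpha d * (K%:R - 1) :> R)%R.
  by rewrite -HK addrK.
have p : (0 < K%:R^-1 * alpha d :> R)%R by rewrite mulr_gt0.
lra.
Qed.
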